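(* The category $\mathcal{C}(numOp)^{op}$ described in the context is not quasi-Gröbner.
   Context: Quasi-Gröbner categories. Let $\mathcal{C}$ be a small category and $c$ an object. An admissible order on the morphisms out of $c$ is a choice, for every object $c'$, of a well-order on $\mathrm{Hom}(c,c')$ such that $f\prec f'$ implies $g\circ f\prec g\circ f'$ for all $g$. On morphisms out of $c$ put the preorder $f\le g$ iff $g=h\circ f$ for some $h$; $|c/\mathcal{C}|$ is the associated poset. A poset is Noetherian if every sequence $x_1,x_2,\dots$ has $i<j$ with $x_i\le x_j$. $\mathcal{C}$ is Gröbner if for every object $c$: (G1) morphisms out of $c$ admit an admissible order, and (G2) $|c/\mathcal{C}|$ is Noetherian. A functor $\Phi:\mathcal{C}\to\mathcal{D}$ has property (F) if for every object $d$ of $\mathcal{D}$ there are finitely many objects $c_i$ of $\mathcal{C}$ and morphisms $f_i:d\to\Phi(c_i)$ such that every $f:d\to\Phi(c)$ factors as $\Phi(g)\circ f_i$ for some $i$ and $g:c_i\to c$. $\mathcal{D}$ is quasi-Gröbner if there is a Gröbner $\mathcal{C}$ and an essentially surjective functor $\mathcal{C}\to\mathcal{D}$ with property (F). Operadic graphs. A graph with half-edges is finite sets $V$, $H$, an involution $inv$ on $H$ and $t:H\to V$; fixed points of $inv$ are leaves, two-element orbits are edges. An operadic graph additionally has a total order on leaves (indexed $0,1,\dots$), for each vertex $v$ a total order on $t^{-1}(v)$, and a total order on $V$ (indexed $1,\dots,n$); considered up to isomorphism preserving all data. The category $\mathcal{C}(numOp)^{op}$: objects are connected operadic graphs with at least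 one vertex (loops, multiple edges and any number of leaves allowed). If $p$ has vertices $v_1<\dots<v_n$, a morphism $p\to q$ consists of such graphs $q_1,\dots,q_n$, $q_l$ having as many leaves as $v_l$ has half-edges, and a bijection $\bigsqcup_l V(q_l)\to V(q)$ order preserving on each $V(q_l)$, such that $q$ is obtained by substituting $q_l$ into $v_l$: the $i$-th leaf of $q_l$ is identified with the $i$-th half-edge of $v_l$; an edge of $p$ between the $i$-th half-edge of $v_j$ and the $k$-th half-edge of $v_l$ becomes an edge of $q$ between the $i$-th leaf of $q_j$ and the $k$-th leaf of $q_l$; if the $i$-th half-edge of $v_j$ is the $k$-th leaf of $p$ then the $i$-th leaf of $q_j$ is the $k$-th leaf of $q$; half-edge orders come from the $q_l$ and the vertex order of $q$ is transported along the bijection. Composition is iterated substitution. (This is the opposite of $\mathcal{C}(P)$ for $P$ the operad of modular operads, restricted to operations of non-zero arity.) *)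

(* Defs.v *)
From mathcomp Require Import all_boot.

Set Implicit Arguments.
Unset Strict Implicit.
Unset Printing Implicit Defensive.

Record Category := {
  cOb : Type;
  cHom : cOb -> cOb -> Type;
  cComp : forall a b c, cHom b c -> cHom a b -> cHom a c;
  cId : forall a, cHom a a;
  cComp_idl : forall a b (f : cHom a b), cComp (cId b) f = f;
  cComp_idr : forall a b (f : cHom a b), cComp f (cId a) = f;
  cComp_assoc : forall a b c d (f : cHom a b) (g : cHom b c) (h : cHom c d),
      cComp h (cComp g f) = cComp (cComp h g) f
}.
Arguments cComp {_ _ _ _} _ _.
Arguments cId {_} _.

(** Category data in which composition and identities are given by their
    graphs: [rIsComp f g h] means  h = g o f,  [rIsId h] means h = id.
    (Used for the target category, whose composition is described
    explicitly below.) *)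
Record RelCategory := {
  rOb : Type;
  rHom : rOb -> rOb -> Type;
  rIsComp : forall a b c, rHom a b -> rHom b c -> rHom a c -> Prop;
  rIsId : forall a, rHom a a -> Prop
}.
Arguments rIsComp {_ _ _ _} _ _ _.
Arguments rIsId {_ _} _.

Record Functor (C : Category) (D : RelCategory) := {
  fobj : cOb C -> rOb D;
  fmap : forall a b, cHom a b -> rHom (fobj a) (fobj b);
  fmap_id : forall a, rIsId (fmap (cId a));
  fmap_comp : forall a b c (f : cHom a b) (g : cHom b c),
      rIsComp (fmap f) (fmap g) (fmap (cComp g f))
}.
Arguments fobj {_ _} _ _.
Arguments fmap {_ _} _ {_ _} _.

Definition admissible_order (C : Category) (c : cOb C)
    (lt : forall c', cHom c c' -> cHom c c' -> Prop) : Prop :=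
  (forall c', well_founded (lt c')) /\
  (forall c' (f g h : cHom c c'), lt c' f g -> lt c' g h -> lt c' f h) /\
  (forall c' (f g : cHom c c'), lt c' f g \/ f = g \/ lt c' g f) /\
  (forall c' c'' (g : cHom c' c'') (f f' : cHom c c'),
      lt c' f f' -> lt c'' (cComp g f) (cComp g f')).

Definition under_le (C : Category) (c : cOb C)
    (f g : {c' : cOb C & cHom c c'}) : Prop :=
  exists h : cHom (projT1 f) (projT1 g), projT2 g = cComp h (projT2 f).

Definition noetherian_under (C : Category) (c : cOb C) : Prop :=
  forall s : nat -> {c' : cOb C & cHom c c'},
    exists i j, (i < j)%N /\ under_le (s i) (s j).

Definition Grobner (C : Category) : Prop :=
  forall c : cOb C,
    (exists lt, @admissible_order C c lt) /\ noetherian_under c.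

Definition ess_surj (C : Category) (D : RelCategory) (F : Functor C D) : Prop :=
  forall d : rOb D, exists (c : cOb C) (f : rHom d (fobj F c)) (g : rHom (fobj F c) d),
    (exists h, rIsComp f g h /\ rIsId h) /\ (exists h, rIsComp g f h /\ rIsId h).

Definition propertyF (C : Category) (D : RelCategory) (F : Functor C D) : Prop :=
  forall d : rOb D,
    exists (n : nat) (cs : nat -> cOb C) (fs : forall i, rHom d (fobj F (cs i))),
      forall (c : cOb C) (f : rHom d (fobj F c)),
        exists i, (i < n)%N /\
          exists g : cHom (cs i) c, rIsComp (fs i) (fmap F g) f.

Definition quasi_Grobner (D : RelCategory) : Prop :=
  exists (C : Category) (F : Functor C D),
    Grobner C /\ ess_surj F /\ propertyF F.

(* Vertices are 0..n-1 (in their order); vertex v has half-edges        *)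
(* 0..(arity v)-1 (in their order).  The entry at half-edge (v,i) is    *)
(*   inl k      : (v,i) is a leaf, namely the k-th leaf, or             *)
(*   inr (w,j)  : (v,i) is paired by the involution with (w,j).         *)
(* Since isomorphisms must preserve all orders, this canonical form     *)
(* represents isomorphism classes bijectively.                          *)

Definition end_t := (nat + nat * nat)%type.
Definition rawgraph := seq (seq end_t).

Definition grow (G : rawgraph) (v : nat) : seq end_t := nth [::] G v.
Definition ent (G : rawgraph) (v i : nat) : end_t := nth (inl 0) (grow G v) i.

Definition leafLabels (G : rawgraph) : seq nat :=
  pmap (fun e : end_t => if e is inl k then Some k else None) (flatten G).
Definition nleaves (G : rawgraph) : nat := size (leafLabels G).

Definition okEnd (G : rawgraph) (v i : nat) : bool :=
  match ent G v i with
  | inl _ => true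
  | inr (w, j) => [&& w < size G, j < size (grow G w),
                      ent G w j == inr (v, i) & (w, j) != (v, i)]
  end.

Definition wf_graph (G : rawgraph) : bool :=
  [&& 0 < size G,
      [forall v : 'I_(size G), forall i : 'I_(size (grow G v)), okEnd G v i]
    & perm_eq (leafLabels G) (iota 0 (nleaves G))].

Definition gadj (G : rawgraph) : rel 'I_(size G) :=
  fun v w => has (fun e : end_t => if e is inr (w', _) then w' == w else false)
                 (grow G v).

Definition gconnected (G : rawgraph) : bool :=
  [forall v : 'I_(size G), forall w : 'I_(size G), connect (@gadj G) v w].

Definition isObj (G : rawgraph) : bool := wf_graph G && gconnected G.
Definition NObj := {G : rawgraph | isObj G}.

(** Substitution.  [sh] lists, for each vertex m of the result, the index
    l of the graph q_l it comes from; the bijection sqcup V(q_l) -> V(q),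
    order preserving on each V(q_l), sends the k-th vertex of q_l to
    [occ sh l k], the position of the (k+1)-st occurrence of l in sh. *)
Fixpoint occ (sh : seq nat) (l k : nat) : nat :=
  match sh with
  | [::] => 0
  | x :: s => if x == l then (if k is k'.+1 then (occ s l k').+1 else 0)
              else (occ s l k).+1
  end.

Definition leafpos (G : rawgraph) (i : nat) : nat * nat :=
  let v := find (fun r : seq end_t => (inl i : end_t) \in r) G in
  (v, index (inl i : end_t) (grow G v)).

Definition tr (p : rawgraph) (qs : seq rawgraph) (sh : seq nat) (l : nat)
    (e : end_t) : end_t :=
  match e with
  | inr (w, j) => inr (occ sh l w, j)
  | inl i =>
      match ent p l i with
      | inl k => inl k
      | inr (l', i') =>
          let wj := leafpos (nth [::] qs l') i' in inr (occ sh l' wj.1, wj.2)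
      end
  end.

Definition subst (p : rawgraph) (qs : seq rawgraph) (sh : seq nat) : rawgraph :=
  [seq let l := nth 0 sh m in
       let k := count_mem l (take m sh) in
       map (tr p qs sh l) (grow (nth [::] qs l) k)
  | m <- iota 0 (size sh)].

Definition mordata := (seq rawgraph * seq nat)%type.

Definition isMor (p q : rawgraph) (m : mordata) : bool :=
  [&& size m.1 == size p,
      all isObj m.1,
      [forall l : 'I_(size p), nleaves (nth [::] m.1 l) == size (grow p l)],
      size m.2 == sumn (map size m.1),
      [forall l : 'I_(size p), count_mem (nat_of_ord l) m.2 == size (nth [::] m.1 l)]
    & q == subst p m.1 m.2].

Definition NHom (p q : NObj) := {m : mordata | isMor (val p) (val q) m}.

(** Composition (iterated substitution) of f = (qs, sh) : p -> q and
    g = (rs, sh') : q -> r. *)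
Definition compraw (p : rawgraph) (f g : mordata) : mordata :=
  let qs := f.1 in let sh := f.2 in let rs := g.1 in let sh' := g.2 in
  ([seq subst (nth [::] qs l)
          [seq nth [::] rs (occ sh l k) | k <- iota 0 (size (nth [::] qs l))]
          [seq count_mem l (take m sh) | m <- sh' & nth 0 sh m == l]
    | l <- iota 0 (size p)],
   [seq nth 0 sh m | m <- sh']).

Definition corolla (a : nat) : rawgraph := [:: [seq (inl i : end_t) | i <- iota 0 a]].

Definition idraw (p : rawgraph) : mordata :=
  ([seq corolla (size (grow p l)) | l <- iota 0 (size p)], iota 0 (size p)).

Definition NumOpOp : RelCategory :=
  {| rOb := NObj;
     rHom := NHom;
     rIsComp := fun a b c (f : NHom a b) (g : NHom b c) (h : NHom a c) =>
                  val h = compraw (val a) (val f) (val g);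
     rIsId := fun a (h : NHom a a) => val h = idraw (val a) |}.

(* Main.v *)
Require Import Defs.
From mathcomp Require Import all_boot zify.
From Stdlib Require Import ClassicalEpsilon Classical.

Definition iscross (v : nat) (e : end_t) : bool :=
  if e is inr (w, _) then w != v else false.
Definition crossrow (G : rawgraph) v := count (iscross v) (grow G v).
Definition cross (G : rawgraph) := sumn [seq crossrow G v | v <- iota 0 (size G)].

Definition Dg (a : nat) : rawgraph :=
  [:: [seq (inr (1, i) : end_t) | i <- iota 0 a];
      [seq (inr (0, i) : end_t) | i <- iota 0 a]].

Lemma pmap_none (A : eqType) (B : Type) (f : A -> option B) (s : seq A) :
  (forall x, x \in s -> f x = None) -> pmap f s = [::].
Proof.
elim: s => //= x s IH H; rewrite H /= ?mem_head //.
by apply: IH => y Hy; apply: H; rewrite inE Hy orbT.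
Qed.

Lemma forall_ok (G : rawgraph) :
  (forall v i, v < size G -> i < size (grow G v) -> okEnd G v i) ->
  [forall v : 'I_(size G), forall i : 'I_(size (grow G v)), okEnd G v i].
Proof.
by move=> H; apply/forallP => v; apply/forallP => i; apply: H.
Qed.

Lemma Dg_leaves a : leafLabels (Dg a) = [::].
Proof.
rewrite /leafLabels; apply: pmap_none => x.
rewrite /= cats0 mem_cat => /orP [] /mapP [i _ ->] //.
Qed.

Lemma Dg_ent0 a i : i < a -> ent (Dg a) 0 i = inr (1, i).
Proof. by move=> Hi; rewrite /ent /grow [nth _ _ 0]/= (nth_map 0) ?size_iota // nth_iota. Qed.
Lemma Dg_ent1 a i : i < a -> ent (Dg a) 1 i = inr (0, i).
Proof. by move=> Hi; rewrite /ent /grow [nth _ _ 1]/= (nth_map 0) ?size_iota // nth_iota. Qed.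
Lemma Dg_size0 a : size (grow (Dg a) 0) = a.
Proof. by rewrite /grow [nth _ _ 0]/= size_map size_iota. Qed.
Lemma Dg_size1 a : size (grow (Dg a) 1) = a.
Proof. by rewrite /grow [nth _ _ 1]/= size_map size_iota. Qed.

Lemma Dg_obj a : isObj (Dg a.+1).
Proof.
apply/andP; split.
  apply/and3P; split => //; last by rewrite /nleaves Dg_leaves.
  apply: forall_ok => v i; case: v => [|[|v]] // _.
    rewrite Dg_size0 => Hi.
    rewrite /okEnd Dg_ent0 // Dg_size1 Hi. by rewrite Dg_ent1 // eqxx.
  rewrite Dg_size1 => Hi.
  by rewrite /okEnd Dg_ent1 // Dg_size0 Hi Dg_ent0 // eqxx.
apply/forallP => v; apply/forallP => w.
case: v => [[|[|v]] Hv] //; case: w => [[|[|w]] Hw] //.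
- by rewrite (bool_irrelevance Hw Hv) connect0.
- by apply: connect1.
- by apply: connect1.
- by rewrite (bool_irrelevance Hw Hv) connect0.
Qed.

Lemma Dg_cross a : cross (Dg a) = (a + a).
Proof.
rewrite /cross /crossrow /= !count_map addn0.
by rewrite !(@eq_count _ _ predT) // !count_predT size_iota.
Qed.

Definition ptg : rawgraph := [:: [::]].
Lemma pt_obj : isObj ptg.
Proof.
apply/andP; split; first by apply/and3P; split => //; apply: forall_ok => -[|v] //.
by apply/forallP => v; apply/forallP => w; rewrite !ord1; apply: connect0.
Qed.

Lemma sumn_ge_size s : all (fun x => 0 < x) s -> size s <= sumn s.
Proof. by elim: s => //= x s IH /andP [Hx Hs]; rewrite -add1n leq_add // IH. Qed.

Lemma obj_size_pos G : isObj G -> 0 < size G.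
Proof. by case/andP => /and3P []. Qed.

Lemma obj_perm G : isObj G -> perm_eq (leafLabels G) (iota 0 (nleaves G)).
Proof. by case/andP => /and3P []. Qed.

Lemma obj_ok G v i : isObj G -> v < size G -> i < size (grow G v) -> okEnd G v i.
Proof.
case/andP => /and3P [_ /forallP H _ _] Hv Hi.
by have /forallP := H (Ordinal Hv) => /(_ (Ordinal Hi)).
Qed.

Lemma obj_leaf_lt G i : isObj G -> i \in leafLabels G -> i < nleaves G.
Proof. by move=> /obj_perm /perm_mem ->; rewrite mem_iota. Qed.

Lemma leaf_in G i v : v < size G -> (inl i : end_t) \in grow G v -> i \in leafLabels G.
Proof.
move=> Hv Hi; rewrite /leafLabels mem_pmap; apply/mapP; exists (inl i) => //.
by apply/flattenP; exists (grow G v) => //; apply: mem_nth.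
Qed.

Lemma size_mor p q m : isMor p q m -> size p <= size q.
Proof.
case: m => qs sh /and5P [/eqP Hs Hall _ /eqP Hsh /andP [_ /eqP ->]].
rewrite /subst size_map size_iota Hsh -Hs.
rewrite -(size_map size qs); apply: sumn_ge_size.
by rewrite all_map; apply: sub_all Hall => G /obj_size_pos.
Qed.

Lemma leaves_mor p q m : isMor p q m -> nleaves p = 0 -> nleaves q = 0.
Proof.
case: m => qs sh /and5P [/eqP Hs Hall /forallP Hlv _ /andP [_ /eqP Hq]] Hp.
rewrite /nleaves /leafLabels Hq; apply/eqP; rewrite size_eq0; apply/eqP.
apply: pmap_none => e /flattenP [r /mapP [m _ ->] /mapP [e0 He0 ->]].
move: He0; set l := nth 0 sh m; set k := count_mem l _ => He0.
case: e0 He0 => [i|[w j]] He0 //=.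
case Hent: (ent p l i) => [k0|[l' i']] //; exfalso.
have Hl : l < size p.
  rewrite ltnNge; apply/negP => Hl.
  by move: He0; rewrite (nth_default [::]) ?Hs // /grow nth_nil.
set Q := nth [::] qs l in He0.
have HQ : isObj Q by apply: (allP Hall); rewrite mem_nth ?Hs.
have Hk : k < size Q.
  rewrite ltnNge; apply/negP => Hk.
  by move: He0; rewrite /grow (nth_default [::] Hk).
have Hi : i < size (grow p l).
  have := Hlv (Ordinal Hl) => /eqP /= <-.
  by apply: obj_leaf_lt => //; apply: leaf_in He0.
have : k0 \in leafLabels p.
  by apply: (@leaf_in p k0 l Hl); rewrite -Hent; apply: mem_nth.
by move: Hp; rewrite /nleaves; case: (leafLabels p).
Qed.

Lemma occ_nseq N w : w < N -> occ (nseq N 0) 0 w = w.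
Proof. by elim: N w => [|N IH] [|w] //= Hw; rewrite IH. Qed.

Lemma pt_mor y : isObj y -> nleaves y = 0 -> isMor ptg y ([:: y], nseq (size y) 0).
Proof.
move=> Hy Hl; apply/and5P; split => //.
- by rewrite /= Hy.
- by apply/forallP => l; rewrite ord1 /= Hl.
- by rewrite /= size_nseq addn0.
apply/andP; split.
  by apply/forallP => l; rewrite ord1 count_nseq /= mul1n.
apply/eqP.
rewrite /subst /= -{1}(mkseq_nth [::] y) /mkseq size_nseq.
apply/eq_in_map => m; rewrite mem_iota => /andP [_ Hm] /=.
rewrite nth_nseq if_same take_nseq ?(ltnW Hm) // count_nseq /= mul1n.
rewrite add0n in Hm; change (grow y m = map (tr ptg [:: y] (nseq (size y) 0) 0) (grow y m)). rewrite -{1}[grow y m]map_id; apply/eq_in_map => e He.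
have /(nthP (inl 0)) [i Hi Hie] := He.
case: e He Hie => [i0|[w j]] He Hie.
  have : i0 \in leafLabels y by apply: leaf_in He.
  by move: Hl; rewrite /nleaves; case: (leafLabels y).
have := @obj_ok y m i Hy Hm Hi; rewrite /okEnd /ent Hie => /andP [Hw _].
by rewrite /= occ_nseq.
Qed.

Lemma occ_index sh l : occ sh l 0 = index l sh.
Proof. by elim: sh => //= x s IH; rewrite /index /= IH; case: eqP. Qed.

Lemma sumn_all1 s : all (fun x => 0 < x) s -> sumn s = size s -> all (fun x => x == 1) s.
Proof.
elim: s => //= x s IH /andP [Hx Hs] E.
have Hge := @sumn_ge_size s Hs.
have Hx1 : x = 1 by lia.
by rewrite Hx1 eqxx /=; apply: IH => //; lia.
Qed.

Lemma sub_in_count (T : eqType) (a b : pred T) s :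
  (forall x, x \in s -> a x -> b x) -> count a s <= count b s.
Proof.
elim: s => //= x s IH H.
apply: leq_add; last by apply: IH => y Hy; apply: H; rewrite inE Hy orbT.
by case Ha: (a x) => //; rewrite (H x) ?mem_head.
Qed.

Lemma count_pmap (A B : Type) (f : A -> option B) (P : pred B) s :
  count P (pmap f s) = count (fun x => oapp P false (f x)) s.
Proof. by elim: s => //= x s IH; case: (f x) => //= y; rewrite IH. Qed.

Lemma leq_sumn_map (T : eqType) (f g : T -> nat) s :
  (forall x, x \in s -> f x <= g x) -> sumn (map f s) <= sumn (map g s).
Proof.
elim: s => //= x s IH H; apply: leq_add; first by apply: H; rewrite mem_head.
by apply: IH => y Hy; apply: H; rewrite inE Hy orbT.
Qed.

Lemma single_leaf (Q : rawgraph) i :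
  isObj Q -> size Q = 1 -> i < nleaves Q -> (inl i : end_t) \in grow Q 0.
Proof.
case: Q => [|r [|]] //= HQ _ Hi.
have : i \in leafLabels [:: r] by rewrite (perm_mem (@obj_perm _ HQ)) mem_iota.
by rewrite /leafLabels mem_pmap /= cats0 => /mapP [[i0|e] He //= [->]].
Qed.

Lemma find_single (Q : rawgraph) x :
  size Q = 1 -> x \in grow Q 0 -> find (fun r => x \in r) Q = 0.
Proof. by case: Q => [|r [|]] //= _ ->. Qed.

Lemma flatten_single (Q : rawgraph) : size Q = 1 -> flatten Q = grow Q 0.
Proof. by case: Q => [|r [|]] //= _; rewrite cats0. Qed.

Lemma cross_mor p q m : isObj p -> isMor p q m -> size q = size p -> cross q <= cross p.
Proof.
case: m => qs sh Hp /and5P [/eqP Hs Hall /forallP Hlv /eqP Hsh /andP [/forallP Hcnt /eqP Hq]] Hsz.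
simpl in *.
set n := size p in Hs Hlv Hcnt Hsz *.
have Hshn : size sh = n by rewrite -Hsz Hq /subst size_map size_iota.
have Hpos : all (fun x => 0 < x) (map size qs).
  by rewrite all_map; apply: sub_all Hall => G /obj_size_pos.
have H1 := @sumn_all1 _ Hpos (etrans (esym Hsh) (etrans Hshn (esym (etrans (size_map _ _) Hs)))).
have HQ1 : forall l, l < n -> size (nth [::] qs l) = 1.
  move=> l Hl; apply/eqP; apply: (allP H1); apply: map_f; apply: mem_nth; by rewrite Hs.
have Hc1 : forall l, l < n -> count_mem l sh = 1.
  by move=> l Hl; have := Hcnt (Ordinal Hl) => /eqP ->; apply: HQ1.
have Hsub : {subset iota 0 n <= sh}.
  by move=> l; rewrite mem_iota add0n => /andP [_ Hl]; rewrite -has_pred1 has_count Hc1.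
have Huniq : uniq sh by apply: (leq_size_uniq (iota_uniq 0 n) Hsub); rewrite size_iota Hshn.
have [_ Heqi] := uniq_min_size (iota_uniq 0 n) Hsub (eq_leq (etrans Hshn (esym (size_iota 0 n)))).
have Hperm : perm_eq sh (iota 0 n).
  apply: uniq_perm => //; first exact: iota_uniq.
have Hshlt : forall m, m < n -> nth 0 sh m < n.
  move=> m Hm; have := @mem_nth _ 0 sh m; rewrite Hshn => /(_ Hm).
  by rewrite -Heqi mem_iota.
have Hrow : forall m, m < n -> crossrow q m <= crossrow p (nth 0 sh m).
  move=> m Hm; have Hl := Hshlt m Hm; set l := nth 0 sh m in Hl *.
  have Hk : count_mem l (take m sh) = 0.
    apply/count_memPn/negP => H.
    move: Huniq; rewrite -(cat_take_drop m sh) cat_uniq (drop_nth 0) ?Hshn //.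
    by case/and3P => _ /=; rewrite H.
  have Hocc : occ sh l 0 = m by rewrite occ_index index_uniq ?Hshn.
  rewrite /crossrow {1}/grow Hq /subst (nth_map 0) ?size_iota ?Hshn // nth_iota // add0n.
  rewrite -/l Hk.
  set Q := nth [::] qs l.
  have HQ : isObj Q by apply: (allP Hall); apply: mem_nth; rewrite Hs.
  have HQs : size Q = 1 by apply: HQ1.
  have Hlv' : nleaves Q = size (grow p l) by have := Hlv (Ordinal Hl) => /eqP.
  rewrite count_map.
  apply: leq_trans (_ : count (fun e : end_t => if e is inl i then iscross l (ent p l i) else false) (grow Q 0) <= _).
    apply: sub_in_count => e He; rewrite /preim /=.
    case: e He => [i|[w j]] He /=.
      rewrite /tr; case Hent: (ent p l i) => [k0|[l' i']] //=.
      case: (eqVneq l' l) => [El|//]; rewrite El.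
      have Hi : i < size (grow p l).
        rewrite ltnNge; apply/negP => H; move: Hent; rewrite /ent nth_default //.
      have := @obj_ok p l i Hp Hl Hi; rewrite /okEnd Hent El => /and4P [_ Hi' _ _].
      have Hin := @single_leaf Q i' HQ HQs ltac:(by rewrite Hlv').
      by rewrite /leafpos -/Q (@find_single _ _ HQs Hin) Hocc eqxx.
    have /(nthP (inl 0)) [x Hx Hxe] := He.
    have := @obj_ok Q 0 x HQ ltac:(by rewrite HQs) Hx; rewrite /okEnd /ent Hxe => /andP [Hw _].
    rewrite HQs in Hw; have Ew : w = 0 by case: w He Hxe Hw => [|w] // ? ?.
    rewrite Ew.
    by rewrite Hocc eqxx.
  rewrite -[grow p l](mkseq_nth (inl 0)) /mkseq count_map -Hlv'.
  rewrite -(permP (@obj_perm _ HQ)) /leafLabels (@flatten_single _ HQs) count_pmap.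
  by apply/eq_leq/eq_count => -[i|e].
rewrite /cross Hsz.
apply: leq_trans (_ : sumn [seq crossrow p (nth 0 sh m) | m <- iota 0 n] <= _).
  by apply: leq_sumn_map => m; rewrite mem_iota add0n => /andP [_ Hm]; apply: Hrow.
rewrite (_ : [seq crossrow p (nth 0 sh m) | m <- iota 0 n] = [seq crossrow p l | l <- sh]).
  by rewrite (perm_sumn (perm_map _ Hperm)).
by rewrite -{2}(mkseq_nth 0 sh) /mkseq Hshn -map_comp.
Qed.

Arguments size_mor {p q m}.
Arguments cross_mor {p q m}.
Arguments leaves_mor {p q m}.
Arguments pt_mor {y}.

Lemma pigeon (Q : nat -> nat -> Prop) n :
  (forall k, exists i, i < n /\ Q i k) -> exists i, forall N, exists k, N <= k /\ Q i k.
Proof.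
elim: n Q => [|n IH] Q H; first by have [i [Hi _]] := H 0.
case: (classic (forall N, exists k, N <= k /\ Q n k)) => [Hn|Hn]; first by exists n.
have [N HN] : exists N, forall k, N <= k -> ~ Q n k.
  apply: NNPP => HH; apply: Hn => N0; apply: NNPP => H2; apply: HH.
  by exists N0 => k Hk HQ; apply: H2; exists k.
have H' : forall k, exists i, i < n /\ Q i (k + N).
  move=> k; have [i [Hi HQ]] := H (k + N); exists i; split => //.
  rewrite ltnS leq_eqVlt in Hi; case/orP: Hi => [/eqP Ei|//].
  by exfalso; apply: (HN (k + N)); [lia | rewrite -Ei].
have [i Hi] := IH (fun i k => Q i (k + N)) H'.
exists i => M; have [k [Hk HQ]] := Hi M; exists (k + N); split => //; lia.
Qed.

Theorem proposition3p12 : ~ quasi_Grobner NumOpOp.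
Proof.
move=> [C [F [HG [Hes HF]]]].
pose pt : NObj := exist _ ptg pt_obj.
pose xk (k : nat) : NObj := exist _ (Dg k.+1) (Dg_obj k).
have Hc : forall k, exists c, inhabited (NHom (xk k) (fobj F c)) /\ inhabited (NHom (fobj F c) (xk k)).
  move=> k; have [c [f [g _]]] := Hes (xk k); exists c; split; constructor; [exact f | exact g].
pose c k := proj1_sig (constructive_indefinite_description _ (Hc k)).
have Hcp : forall k, inhabited (NHom (xk k) (fobj F (c k))) /\ inhabited (NHom (fobj F (c k)) (xk k)).
  move=> k; exact: (proj2_sig (constructive_indefinite_description _ (Hc k))).
have Hsz : forall k, size (val (fobj F (c k))) = 2.
  move=> k; have [[f] [g]] := Hcp k.
  have H1 := size_mor (valP f); have H2 := size_mor (valP g).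
  by apply/eqP; rewrite eqn_leq; apply/andP; split; [exact: H2 | exact: H1].
have Hcr : forall k, cross (val (fobj F (c k))) = k.+1 + k.+1.
  move=> k; have [[f] [g]] := Hcp k.
  have H1 := cross_mor (Dg_obj k) (valP f) (Hsz k).
  have H2 := cross_mor (valP (fobj F (c k))) (valP g) (esym (Hsz k)).
  rewrite /= Dg_cross in H1 H2.
  by apply/eqP; rewrite eqn_leq; apply/andP; split.
have Hlf : forall k, nleaves (val (fobj F (c k))) = 0.
  move=> k; have [[f] _] := Hcp k.
  by apply: (leaves_mor (valP f)); rewrite /= /nleaves Dg_leaves.
have [n [cs [fs HFp]]] := HF pt.
have Hex : forall k, exists i, i < n /\ inhabited (cHom (cs i) (c k)).
  move=> k.
  pose f : NHom pt (fobj F (c k)) :=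
    exist _ ([:: val (fobj F (c k))], nseq (size (val (fobj F (c k)))) 0)
      (pt_mor (valP (fobj F (c k))) (Hlf k)).
  have [i [Hi [g _]]] := HFp (c k) f.
  by exists i; split => //; constructor; exact g.
have [i Hinf] := @pigeon _ _ Hex.
have Hpick : forall N, {p : {k : nat & cHom (cs i) (c k)} | N <= projT1 p}.
  move=> N; apply: constructive_indefinite_description.
  have [k [Hk [g]]] := Hinf N.
  by exists (existT _ k g).
pose P := fix P j := match j with
  | 0 => proj1_sig (Hpick 0)
  | j'.+1 => proj1_sig (Hpick (projT1 (P j')).+1) end.
have Pinc : forall j, projT1 (P j) < projT1 (P j.+1).
  move=> j; exact: (proj2_sig (Hpick _)).
have Pmono : forall j d, projT1 (P j) < projT1 (P (j + d).+1).
  move=> j; elim=> [|d IH]; first by rewrite addn0.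
  by apply: ltn_trans IH _; rewrite addnS; exact: Pinc.
pose s j : {c' : cOb C & cHom (cs i) c'} := existT _ (c (projT1 (P j))) (projT2 (P j)).
have [j [j' [Hjj' [h _]]]] := (HG (cs i)).2 s.
simpl in h.
have := cross_mor (valP (fobj F (c _))) (valP (fmap F h)) (etrans (Hsz _) (esym (Hsz _))).
rewrite !Hcr.
have := Pmono j (j' - j.+1).
rewrite (_ : (j + (j' - j.+1)).+1 = j'); last by lia.
lia.
Qed.
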